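(* There is a universal constant $C\ge1$ such that for every $k\ge1$ and every perfect square $n$, \[\sum_{\lambda\vdash k}\frac{k!}{\lambda_1!\cdots\lambda_r!}\cdot\frac{(n)_{r}}{|\mathrm{Aut}(\lambda)|}\cdot\left|\mathbb E_{x\in\mathcal S(\sqrt n)}\big[x_1^{\lambda_1}\cdots x_r^{\lambda_r}\big]\right|\ \le\ k^{Ck}\,n^{k/2},\] where for each partition $\lambda=(\lambda_1\ge\cdots\ge\lambda_r>0)$ of $k$, $r=r(\lambda)$ is its number of parts. Moreover, for $n\ge6$ one may take $C=2$.
   Context: $\mathcal S(\sqrt n)=\{x\in\{\pm1\}^n:\sum_i x_i=\sqrt n\}$ with $x$ uniform on it. $(n)_r=n(n-1)\cdots(n-r+1)$ is the falling factorial. For a partition $\lambda$ of $k$, $|\mathrm{Aut}(\lambda)|=\prod_{i\ge1}p_i(\lambda)!$ where $p_i(\lambda)$ is the number of parts of $\lambda$ equal to $i$. *)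

(* Defs.v *)
From HB Require Import structures.
From mathcomp Require Import all_boot all_order all_algebra.
From mathcomp Require Import reals exp.
Set Implicit Arguments. Unset Strict Implicit. Unset Printing Implicit Defensive.
Import Order.TTheory GRing.Theory Num.Theory.
Local Open Scope ring_scope.

Definition is_partition (k : nat) (l : seq nat) : bool :=
  [&& sorted geq l, all (fun a => 0 < a)%N l & sumn l == k].

Definition partition_candidates (k : nat) : seq (seq nat) :=
  flatten [seq [seq [seq nat_of_ord i | i <- tval t] | t : r.-tuple 'I_k.+1]
          | r <- iota 0 k.+1].

Definition partitions (k : nat) : seq (seq nat) :=
  undup [seq l <- partition_candidates k | is_partition k l].

(* |Aut(lambda)| = prod_{i >= 1} p_i(lambda)! ; parts are <= k. *)
Definition aut_card (k : nat) (l : seq nat) : nat :=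
  (\prod_(1 <= i < k.+1) (count_mem i l)`!)%N.

Definition multinom (R : realType) (k : nat) (l : seq nat) : R :=
  (k`!)%:R / (\prod_(a <- l) a`!)%:R.

(* {+-1}-valued vectors of length n, encoded by booleans: true ↦ +1, false ↦ -1. *)
Definition spin (R : realType) (b : bool) : R := if b then 1 else -1.

Definition slice (R : realType) (n : nat) (s : R) : {set {ffun 'I_n -> bool}} :=
  [set x : {ffun 'I_n -> bool} | \sum_(i < n) @spin R (x i) == s].

(* x_1^{l_1} ... x_r^{l_r}; coordinates beyond n are omitted (only relevant
   when r > n, in which case (n)_r = 0 kills the term). *)
Definition monomial (R : realType) (n : nat) (l : seq nat) (x : {ffun 'I_n -> bool}) : R :=
  \prod_(i < n) @spin R (x i) ^+ (nth 0%N l i).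

Definition slice_expect (R : realType) (n : nat) (s : R)
    (f : {ffun 'I_n -> bool} -> R) : R :=
  (\sum_(x in @slice R n s) f x) / (#|@slice R n s|)%:R.

Definition lhsB6 (R : realType) (k n : nat) : R :=
  \sum_(l <- partitions k)
    @multinom R k l * ((n ^_ (size l))%:R / (aut_card k l)%:R)
    * `| @slice_expect R n (Num.sqrt (n%:R)) (@monomial R n l) |.

(* Main.v *)
Require Import Defs.
From HB Require Import structures.
From mathcomp Require Import all_boot all_order all_algebra.
From mathcomp Require Import reals exp.
From mathcomp Require Import fingroup perm.
From mathcomp Require Import ring zify.
Import Order.TTheory GRing.Theory Num.Theory.
Set Implicit Arguments. Unset Strict Implicit. Unset Printing Implicit Defensive.


Lemma part_facts (l : seq nat) : all (fun a => 0 < a)%N l ->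
  [/\ (2 * size l <= sumn l + count odd l)%N,
      (count_mem 1%N l + 3 * (count odd l - count_mem 1%N l) <= sumn l)%N,
      (count_mem 1%N l <= count odd l)%N &
      (count odd l <= sumn l)%N ].
Proof.
elim: l => [|a l IH] //= /andP [a0 /IH [H1 H2 H3 H4]].
move: H1 H2 H3 H4.
move: (count odd l) (count_mem 1%N l) (sumn l) (size l) => j p s r H1 H2 H3 H4.
case: a a0 => [|[|[|a]]] //= _; rewrite ?eqxx /=.
- split; lia.
- split; lia.
- have : (odd a.+3 <= 1)%N by case: odd.
  split; lia.
Qed.

Lemma fact_le_pow p d : ((p + d)`! <= p`! * (p + d) ^ d)%N.
Proof.
elim: d => [|d IH]; first by rewrite addn0 expn0 muln1.
rewrite addnS factS expnS mulnCA leq_mul2l; apply/orP; right.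
apply: (leq_trans IH); rewrite leq_mul2l; apply/orP; right.
by case: d {IH} => [|d]; rewrite ?expn0 // leq_exp2r.
Qed.

Lemma fact_le_k k p : (p <= k)%N -> (k`! <= p`! * k ^ (k - p))%N.
Proof. by move=> pk; have := fact_le_pow p (k - p); rewrite subnKC. Qed.

Lemma fact_le_kj j k : (j <= k)%N -> (j`! <= k ^ j)%N.
Proof.
elim: j => [|j IH] jk //; rewrite factS expnS leq_mul //.
by apply: IH; apply: ltnW.
Qed.

Lemma nat_ineq k p j : (1 <= k)%N -> (p <= j)%N -> (p + 3 * (j - p) <= k)%N ->
  (2 ^ k.-1 * k ^ (k - p + j) <= k ^ (2 * k))%N.
Proof.
move=> k1 pj H.
case: k k1 H => [|[|[|k]]] // _ H.
  have -> : j = p by lia.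
  by rewrite !ssrnat.exp1n.
  have -> : j = p by lia.
  by have -> : (2 - p + p = 2)%N by lia.
set K := k.+3.
set o := (j - p)%N.
have eE : (K - p + j = K + o)%N by lia.
rewrite eE.
have -> : (2 * K = (K + o) + (K - o))%N by lia.
rewrite [K ^ (_ + (_ - _))]expnD [X in (X <= _)%N]mulnC leq_mul2l; apply/orP; right.
apply: (leq_trans (leq_pexp2l (isT : (0 < 2)%N) (leq_pred K))).
rewrite -(@leq_exp2r _ _ 3) // -!expnM.
apply: (@leq_trans (K ^ (2 * K))).
  rewrite mulnC !expnM leq_exp2r //; apply: (@leq_trans (3 ^ 2)) => //; rewrite leq_exp2r //.
by apply: leq_pexp2l => //; lia.
Qed.


Fixpoint comps (f k : nat) : seq (seq nat) :=
  if k is 0 then [:: [::]] else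
  match f with
  | 0 => [::]
  | f'.+1 => flatten [seq [seq a.+1 :: c | c <- comps f' (k - a.+1)] | a <- iota 0 k]
  end.

Lemma comps_mem f k l : (k <= f)%N -> all (fun a => 0 < a)%N l -> sumn l = k ->
  l \in comps f k.
Proof.
elim: f k l => [|f IH] k l.
  rewrite leqn0 => /eqP -> {k}.
  by case: l => [|a l] //= /andP [a0 _] H; lia.
case: k => [|k] kf; first by case: l => [|a l] //= /andP [a0 _] H; lia.
case: l => [|[|a] l] //= Hl [Hs].
have H : a.+1 :: l \in flatten [seq [seq b.+1 :: c | c <- comps f (k.+1 - b.+1)] | b <- iota 0 k.+1].
  apply/flatten_mapP; exists a.
    by rewrite mem_iota; lia.
  apply: map_f; apply: IH => //; lia.
exact: H.
Qed.

Lemma sum_pow_pred k : (\sum_(0 <= i < k.+1) 2 ^ i.-1 = 2 ^ k)%N.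
Proof.
elim: k => [|k IH]; first by rewrite big_nat1.
by rewrite big_nat_recr //= IH expnS mul2n -addnn.
Qed.

Lemma comps_size f k : (size (comps f k) <= 2 ^ k.-1)%N.
Proof.
elim: f k => [|f IH] [|k] //.
change (size (flatten [seq [seq b.+1 :: c | c <- comps f (k.+1 - b.+1)] | b <- iota 0 k.+1]) <= 2 ^ k)%N.
rewrite size_flatten /shape -map_comp.
rewrite sumnE big_map.
apply: (@leq_trans (\sum_(a <- iota 0 k.+1) 2 ^ (k.+1 - a.+1).-1)).
  by apply: leq_sum => a _; rewrite /= size_map IH.
rewrite -[iota 0 k.+1]/(index_iota 0 k.+1) big_nat_rev /= -sum_pow_pred.
apply: eq_leq; apply: eq_big_nat => i /andP [_ Hi].
by congr (2 ^ _); lia.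
Qed.

Lemma card_odd_set n (l : seq nat) : (size l <= n)%N ->
  #|[set i : 'I_n | odd (nth 0%N l i)]| = count odd l.
Proof.
move=> Hs.
have -> : #|[set i : 'I_n | odd (nth 0%N l i)]| = count (fun i => odd (nth 0%N l i)) (iota 0 n).
  rewrite -val_enum_ord count_map cardE /enum_mem size_filter count_filter.
  by apply: eq_count => i; rewrite !inE /= andbT.
rewrite -(subnKC Hs) iotaD count_cat add0n.
have -> : count (fun i => odd (nth 0%N l i)) (iota (size l) (n - size l)) = 0%N.
  apply/eqP; rewrite -leqn0 leqNgt -has_count; apply/hasPn => i.
  by rewrite mem_iota => /andP [Hi _]; rewrite nth_default.
by rewrite addn0 -count_map -[in RHS](mkseq_nth 0%N l).
Qed.

Local Open Scope ring_scope.

Definition ES (R : realType) (n : nat) (s : R) (I : {set 'I_n}) : R :=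
  @slice_expect R n s (fun x => \prod_(i in I) @spin R (x i)).

Lemma spin2 (R : realType) b : @spin R b * spin R b = 1.
Proof. by case: b; rewrite /spin ?mulr1 ?mulrNN ?mulr1. Qed.

Lemma ES_perm (R : realType) (n : nat) (s : R) (I : {set 'I_n}) (sg : {perm 'I_n}) :
  ES s (sg @: I) = ES s I.
Proof.
rewrite /ES /slice_expect; congr (_ / _).
pose phi (x : {ffun 'I_n -> bool}) := [ffun i => x (sg i)].
have phi_inj : injective phi.
  move=> x y /ffunP H; apply/ffunP => i.
  by have := H (sg^-1 i)%g; rewrite !ffunE permKV.
have memS x : (phi x \in slice n s) = (x \in slice n s).
  rewrite !inE; congr (_ == _).
  rewrite [RHS](reindex_inj (@perm_inj _ sg)) /=.
  by apply: eq_bigr => i _; rewrite ffunE.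
rewrite [RHS](reindex_inj phi_inj) /=.
rewrite [RHS](eq_bigl (fun x => x \in slice n s)); last by move=> x; rewrite memS.
apply: eq_bigr => x _.
rewrite big_imset /=; last by move=> i j _ _; apply: perm_inj.
by apply: eq_bigr => i _; rewrite ffunE.
Qed.

Lemma tperm_imset (T : finType) (a b : T) (I : {set T}) :
  a \in I -> b \notin I -> tperm a b @: I = b |: (I :\ a).
Proof.
move=> aI bI; apply/setP => x.
apply/imsetP/idP; rewrite !inE.
- case=> y yI ->{x}; case: tpermP.
  + by move=> _; rewrite eqxx.
  + by move=> yb; move: bI; rewrite -yb yI.
  + by move=> /eqP ya /eqP yb; rewrite yI ya orbT.
- move=> H; exists (tperm a b x); last by rewrite tpermK.
  case: tpermP => //.
  + move=> xa; move: H; rewrite xa eqxx /= orbF => /eqP ab.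
    by move: bI; rewrite -ab aI.
  + by move=> /eqP xa /eqP xb; move: H; rewrite (negbTE xb) xa.
Qed.

Lemma ES_card (R : realType) (n : nat) (s : R) (I J : {set 'I_n}) :
  #|I| = #|J| -> ES s I = ES s J.
Proof.
move: {2}#|I :\: J| (erefl #|I :\: J|) => d; elim: d I => [|d IH] I HD HIJ.
  have: I \subset J by rewrite -setD_eq0 -cards_eq0 HD.
  move=> sub; suff -> : I = J by []; apply/eqP; by rewrite eqEcard sub HIJ leqnn.
have [a aIJ] : exists a, a \in I :\: J.
  by apply/set0Pn; rewrite -card_gt0 HD.
have HD2 : #|J :\: I| = d.+1.
  have := cardsID J I; have := cardsID I J.
  by rewrite setIC HIJ HD => <- /eqP; rewrite eqn_add2l => /eqP.
have [b bJI] : exists b, b \in J :\: I.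
  by apply/set0Pn; rewrite -card_gt0 HD2.
move: aIJ bJI; rewrite !inE => /andP [aJ aI] /andP [bI bJ].
rewrite -(ES_perm s I (tperm a b)) tperm_imset //.
apply: IH.
  suff -> : (b |: I :\ a) :\: J = (I :\: J) :\ a.
    by move: HD; rewrite (cardsD1 a (I :\: J)) !inE aI aJ add1n => [[]].
  apply/setP => x; rewrite !inE.
  have [->|xb] := eqVneq x b; rewrite ?bJ /=.
    by rewrite andbF.
  by rewrite andbCA.
rewrite cardsU1 !inE negb_and bI orbT /= -HIJ (cardsD1 a I) aI. by [].
Qed.

Lemma ES_rec (R : realType) (n m : nat) (I : {set 'I_n}) :
  m%:R * ES (m%:R : R) I =
  \sum_(i in I) ES (m%:R : R) (I :\ i) + \sum_(i in ~: I) ES (m%:R : R) (i |: I).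
Proof.
rewrite /ES /slice_expect -!mulr_suml -mulrDl mulrA; congr (_ / _).
rewrite mulr_sumr.
transitivity (\sum_(x in slice n (m%:R : R)) \sum_(i < n)
     (spin R (x i) * \prod_(j in I) spin R (x j))).
  apply: eq_bigr => x; rewrite inE => /eqP <-.
  by rewrite mulr_suml.
rewrite exchange_big /= (bigID (fun i => i \in I)) /=.
congr (_ + _).
  apply: eq_bigr => i iI; apply: eq_bigr => x _.
  by rewrite (big_setD1 i iI) /= mulrA spin2 mul1r.
apply: eq_big => [i|i]; first by rewrite inE.
move=> iI; apply: eq_bigr => x _.
by rewrite big_setU1.
Qed.

Fixpoint invol (j : nat) : nat :=
  match j with 0 => 1%N | 1 => 1%N | S (S j' as k) => (invol k + k * invol j')%N end.

Lemma invS j : invol j.+1 = (invol j + j * invol j.-1)%N.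
Proof. by case: j => [|j]. Qed.

Lemma invol_le_fact j : (invol j <= j`!)%N.
Proof.
elim/ltn_ind: j => j IH.
case: j IH => [|[|j]] IH; [by [] | by [] | ].
have H1 := IH j.+1 (ltnSn _).
have H2 := IH j (leqW (ltnSn j)).
have -> : invol j.+2 = (invol j.+1 + j.+1 * invol j)%N by [].
have H3 : (j`! <= (j.+1)`!)%N by rewrite factS leq_pmull.
apply: (leq_trans (leq_add H1 (leq_mul (leqnn j.+1) (leq_trans H2 H3)))).
by rewrite [(j.+2)`!]factS [(j.+2 * _)%N]mulSn.
Qed.

Lemma ffact_pred n j : (0 < j)%N -> (n ^_ j <= n ^_ j.-1 * n)%N.
Proof. by case: j => // j _; rewrite ffactnSr /= leq_mul2l leq_subr orbT. Qed.

Lemma expr_pred2 (R : realType) (x : R) j : (0 < j)%N -> x ^+ j.+1 = x ^+ j.-1 * x ^+ 2.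
Proof. by case: j => // j _; rewrite -exprD addn2. Qed.

Lemma ES0 (R : realType) n (s : R) : `|ES s (set0 : {set 'I_n})| <= 1.
Proof.
rewrite /ES /slice_expect.
rewrite (eq_bigr (fun _ => 1)); last by move=> x _; rewrite big_set0.
rewrite sumr_const.
case: (#|slice n s|) => [|c]; first by rewrite mulr0n mul0r normr0.
by rewrite -[1 *+ c.+1]/(c.+1%:R) mulfV ?normr1 // pnatr_eq0.
Qed.

Lemma ES_bound (R : realType) (m j : nat) (I : {set 'I_(m ^ 2)}) :
  #|I| = j ->
  `|ES (m%:R : R) I| * ((m ^ 2) ^_ j)%:R * (m%:R : R) ^+ j
     <= (invol j)%:R * ((m ^ 2)%:R : R) ^+ j.
Proof.
set n := (m ^ 2)%N.
have nM : (n%:R : R) = m%:R ^+ 2 by rewrite /n natrX.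
elim/ltn_ind: j I => j IH I HI.
case: j IH HI => [|j] IH HI.
  have -> : I = set0 by apply/eqP; rewrite -cards_eq0 HI.
  by rewrite !expr0 !mulr1 /= ES0.
have [a aI] : exists a, a \in I by apply/set0Pn; rewrite -card_gt0 HI.
set K := I :\ a.
have HK : #|K| = j by move: HI; rewrite (cardsD1 a I) aI add1n => [[]].
have jn : (j < n)%N by rewrite -HI; have := max_card I; rewrite card_ord.
have Hrec := ES_rec R m K.
have Hsum : \sum_(i in ~: K) ES (m%:R : R) (i |: K) = (n - j)%:R * ES (m%:R : R) I.
  rewrite (eq_bigr (fun _ => ES (m%:R : R) I)); last first.
    move=> i; rewrite inE => iK; apply: ES_card.
    by rewrite cardsU1 iK HK HI.
  rewrite sumr_const -[_ *+ #|~: K|]mulr_natl; congr (_ * _); congr (_%:R).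
  have := cardsC K; rewrite HK card_ord => H; apply: (@addnI j); by rewrite H subnKC // ltnW.
rewrite Hsum in Hrec.
have Heq : (n - j)%:R * ES (m%:R : R) I =
   m%:R * ES (m%:R : R) K - \sum_(i in K) ES (m%:R : R) (K :\ i).
  by rewrite Hrec addrC addKr.
set e := ES _ I.
set M : R := m%:R.
have M0 : 0 <= M by [].
have B1 : `|ES M K| * (n ^_ j)%:R * M ^+ j <= (invol j)%:R * (n%:R) ^+ j.
  by apply: IH.
have B2 : forall i, i \in K ->
   `|ES M (K :\ i)| * (n ^_ j)%:R * M ^+ j.+1 <= (invol j.-1)%:R * (n%:R) ^+ j.+1.
  move=> i iK.
  have HKi : #|K :\ i| = j.-1 by move: HK; rewrite (cardsD1 i K) iK add1n => <-.
  have j0 : (0 < j)%N by rewrite -HK card_gt0; apply/set0Pn; exists i.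
  have IH2 := IH j.-1 (leq_ltn_trans (leq_pred j) (ltnSn j)) (K :\ i) HKi.
  have E1 : (n ^_ j)%:R <= (n ^_ j.-1)%:R * (n%:R : R).
    by rewrite -natrM ler_nat ffact_pred.
  rewrite (expr_pred2 M j0) -nM mulrA.
  apply: (le_trans (y := `|ES M (K :\ i)| * ((n ^_ j.-1)%:R * n%:R) * M ^+ j.-1 * n%:R)).
    apply: ler_wpM2r; first by rewrite ler0n.
    apply: ler_wpM2r; first by rewrite exprn_ge0.
    by apply: ler_wpM2l.
  rewrite (expr_pred2 (n%:R : R) j0) expr2 !mulrA.
  apply: ler_wpM2r; first by rewrite ler0n.
  rewrite -(mulrA _ (n%:R)) (mulrC (n%:R)) mulrA.
  apply: ler_wpM2r; first by rewrite ler0n.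
  exact: IH2.
set c : R := (n ^_ j)%:R * M ^+ j.+1.
have c0 : 0 <= c by rewrite mulr_ge0 // exprn_ge0.
have -> : `|e| * (n ^_ j.+1)%:R * M ^+ j.+1 = `|(n - j)%:R * e| * c.
  rewrite (normrM ((n - j)%:R) e) normr_nat /c ffactnSr natrM.
  by rewrite [_ * (n - j)%:R]mulrC !mulrA [`|e| * _]mulrC.
rewrite Heq.
apply: (le_trans (y := (M * `|ES M K| + \sum_(i in K) `|ES M (K :\ i)|) * c)).
  apply: ler_wpM2r => //.
  apply: (le_trans (ler_normB _ _)).
  by rewrite normrM ger0_norm // lerD2l ler_norm_sum.
rewrite mulrDl mulr_suml.
apply: (le_trans (y := (invol j)%:R * n%:R ^+ j.+1 +
                 \sum_(i in K) (invol j.-1)%:R * n%:R ^+ j.+1)).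
  apply: lerD.
    have -> : M * `|ES M K| * c = `|ES M K| * (n ^_ j)%:R * M ^+ j * n%:R.
      by rewrite /c nM !exprS; ring.
    rewrite exprSr mulrA.
    by apply: ler_wpM2r; [rewrite ler0n|].
  apply: ler_sum => i iK; rewrite /c mulrA; exact: B2.
rewrite sumr_const HK invS natrD natrM mulrDl.
by rewrite -[_ *+ j]mulr_natl mulrA.
Qed.

Lemma spin_exp (R : realType) b a : @spin R b ^+ a = if odd a then spin R b else 1.
Proof.
case: b; rewrite /spin ?expr1n; first by case: ifP.
by rewrite -signr_odd; case: ifP => _; rewrite ?expr1 ?expr0.
Qed.

Lemma monomial_ES (R : realType) (n : nat) (s : R) (l : seq nat) :
  slice_expect s (@monomial R n l) = ES s [set i : 'I_n | odd (nth 0%N l i)].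
Proof.
rewrite /slice_expect /ES; congr (_ / _); apply: eq_bigr => x _.
rewrite /monomial [RHS]big_mkcond /=; apply: eq_bigr => i _.
by rewrite spin_exp inE.
Qed.

Lemma partition_facts k l : l \in partitions k -> all (fun a => 0 < a)%N l /\ sumn l = k.
Proof.
rewrite /partitions mem_undup mem_filter => /andP [H _].
by move: H; rewrite /is_partition => /and3P [_ Ha /eqP Hs].
Qed.

Lemma partitions_size k : (size (partitions k) <= 2 ^ k.-1)%N.
Proof.
apply: (leq_trans _ (comps_size k k)).
apply: uniq_leq_size; first exact: undup_uniq.
move=> l /partition_facts [Ha Hs]; exact: comps_mem.
Qed.

Lemma ffact_le_split n j d : (n ^_ (j + d) <= n ^_ j * n ^ d)%N.
Proof.
elim: d => [|d IH]; first by rewrite addn0 muln1.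
rewrite addnS ffactnSr expnS.
apply: (@leq_trans (n ^_ j * n ^ d * n)); first by apply: leq_mul => //; apply: leq_subr.
by rewrite -mulnA [(n ^ d * n)%N]mulnC.
Qed.

Lemma aut_ge k l : (1 <= k)%N -> ((count_mem 1%N l)`! <= aut_card k l)%N.
Proof.
move=> k1; rewrite /aut_card big_ltn //.
apply: leq_pmulr; apply: prodn_gt0 => i; exact: fact_gt0.
Qed.

Lemma term_bound (R : realType) (k m : nat) (l : seq nat) :
  (1 <= m)%N -> (1 <= k)%N -> l \in partitions k ->
  multinom R k l * (((m ^ 2) ^_ (size l))%:R / (aut_card k l)%:R)
    * `| slice_expect (Num.sqrt ((m ^ 2)%:R)) (@monomial R (m ^ 2) l) |
  <= (k ^ (k - count_mem 1%N l + count odd l))%:R * (m%:R : R) ^+ k.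
Proof.
move=> m1 k1 /partition_facts [Ha Hs].
have [F1 F2 F3 F4] := part_facts Ha.
rewrite Hs in F1 F2 F4.
set n := (m ^ 2)%N.
set r := size l.
set p := count_mem 1%N l.
set j := count odd l.
set M : R := m%:R.
have M0 : 0 < M by rewrite ltr0n.
have nM : (n%:R : R) = M ^+ 2 by rewrite /n natrX.
have rhs0 : 0 <= (k ^ (k - p + j))%:R * M ^+ k by rewrite mulr_ge0 // exprn_ge0 // ltW.
have [rn|nr] := leqP r n; last first.
  by rewrite ffact_small // mul0r mulr0 mul0r.
have sq : Num.sqrt (n%:R : R) = M by rewrite nM sqrtr_sqr normr_nat.
rewrite sq monomial_ES.
set E := ES M _.
have HE : `|E| * (n ^_ j)%:R * M ^+ j <= (invol j)%:R * (n%:R) ^+ j.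
  by apply: ES_bound; rewrite card_odd_set.
have jr : (j <= r)%N by rewrite /j /r count_size.
have S1 : (n ^_ r)%:R * `|E| <= (invol j)%:R * M ^+ k.
  rewrite -(ler_pM2r (exprn_gt0 j M0)).
  have -> : r = (j + (r - j))%N by rewrite subnKC.
  apply: (le_trans (y := (n ^ (r - j))%:R * (`|E| * (n ^_ j)%:R * M ^+ j))).
    have -> : (n ^ (r - j))%:R * (`|E| * (n ^_ j)%:R * M ^+ j) =
       (n ^_ j * n ^ (r - j))%:R * `|E| * M ^+ j by rewrite natrM; ring.
    apply: ler_wpM2r; first by rewrite exprn_ge0 // ltW.
    apply: ler_wpM2r => //.
    by rewrite ler_nat ffact_le_split.
  apply: (le_trans (y := (n ^ (r - j))%:R * ((invol j)%:R * (n%:R) ^+ j))).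
    by apply: ler_wpM2l => //.
  rewrite natrX nM -!exprM.
  rewrite mulrCA -exprD -mulrA -exprD.
  apply: ler_wpM2l => //.
  apply: ler_weXn2l; first by rewrite ler1n.
  lia.
set P := (\prod_(a <- l) a`!)%N.
set A := aut_card k l.
have P0 : (0 < P)%N by apply: prodn_gt0 => a; exact: fact_gt0.
have A0' : (0 < A)%N by apply: (leq_trans (fact_gt0 p)); exact: aut_ge.
have PA0 : (0 : R) < (P * A)%:R by rewrite ltr0n muln_gt0 P0 A0'.
have pk : (p <= k)%N by apply: (leq_trans F3).
have jk : (j <= k)%N by [].
have Hnat : (k`! * invol j <= k ^ (k - p + j) * (P * A))%N.
  apply: (leq_trans (leq_mul (fact_le_k pk) (leq_trans (invol_le_fact j) (fact_le_kj jk)))).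
  rewrite expnD -mulnA mulnC leq_mul2l; apply/orP; right.
  apply: (leq_trans (aut_ge l k1)).
  by rewrite mulnC leq_pmulr.
have -> : multinom R k l * ((n ^_ r)%:R / A%:R) * `|E| =
    (k`!)%:R / (P * A)%:R * ((n ^_ r)%:R * `|E|).
  by rewrite /multinom natrM invfM; ring.
apply: (le_trans (y := (k`!)%:R / (P * A)%:R * ((invol j)%:R * M ^+ k))).
  by apply: ler_wpM2l => //; rewrite divr_ge0 // ltW.
rewrite mulrA; apply: ler_wpM2r; first by rewrite exprn_ge0 // ltW.
rewrite mulrAC ler_pdivrMr // -!natrM ler_nat.
exact: Hnat.
Qed.

Lemma main_bound (R : realType) (k m : nat) : (1 <= k)%N -> (1 <= m)%N ->
  lhsB6 R k (m ^ 2) <= (k ^ (2 * k))%:R * (m%:R : R) ^+ k.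
Proof.
move=> k1 m1.
set M : R := m%:R.
have M0 : 0 <= M ^+ k by rewrite exprn_ge0.
have T0 : (0 : R) < (2 ^ k.-1)%:R by rewrite ltr0n expn_gt0.
set c : R := (k ^ (2 * k))%:R / (2 ^ k.-1)%:R * M ^+ k.
rewrite /lhsB6.
apply: (le_trans (y := \sum_(l <- partitions k) c)).
  rewrite big_seq [X in _ <= X]big_seq; apply: ler_sum => l Hl.
  apply: (le_trans (term_bound R m1 k1 Hl)); rewrite /c.
  apply: ler_wpM2r => //.
  rewrite ler_pdivlMr // -natrM ler_nat mulnC.
  have [Ha Hs] := partition_facts Hl.
  have [_ F2 F3 _] := part_facts Ha.
  rewrite Hs in F2.
  exact: nat_ineq.
rewrite big_const_seq count_predT iter_addr_0 -[_ *+ size _]mulr_natr /c.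
rewrite mulrAC ler_wpM2r // mulrAC ler_pdivrMr // ler_wpM2l ?ler0n // ler_nat.
exact: partitions_size.
Qed.

Lemma rhs_eq (R : realType) (k m : nat) :
  powR (k%:R : R) (2 * k%:R) * powR ((m ^ 2)%:R) (k%:R / 2)
   = (k ^ (2 * k))%:R * (m%:R : R) ^+ k.
Proof.
have -> : (2 : R) * k%:R = (2 * k)%N%:R by rewrite natrM.
rewrite natrX; congr (_ * _).
  by rewrite powR_mulrn ?ler0n // natrX.
rewrite -[(m%:R : R) ^+ 2]powR_mulrn ?ler0n // -powRrM.
rewrite mulrCA divff ?mulr1 ?pnatr_eq0 //.
by rewrite powR_mulrn ?ler0n.
Qed.

Theorem lemmaB6 (R : realType) :
  exists C : R, 1 <= C /\
    (forall (k m : nat), (1 <= k)%N -> (1 <= m)%N ->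
       lhsB6 R k (m ^ 2) <= powR (k%:R) (C * k%:R) * powR ((m ^ 2)%:R) (k%:R / 2)) /\
    (forall (k m : nat), (1 <= k)%N -> (1 <= m)%N -> (6 <= m ^ 2)%N ->
       lhsB6 R k (m ^ 2) <= powR (k%:R) (2 * k%:R) * powR ((m ^ 2)%:R) (k%:R / 2)).
Proof.
exists 2; split; first by rewrite ler1n.
split=> k m k1 m1; rewrite rhs_eq; [|move=> _]; exact: main_bound.
Qed.
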